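(* A permutation $w\in S_n$ is circuit-free if and only if $|R(w)|=|B(w)|+|C(w)|-1$.
   Context: $S_n$ is generated by the adjacent transpositions $s_1,\dots,s_{n-1}$. A reduced word for $w$ is a word $i_1\cdots i_k$ with $w=s_{i_1}\cdots s_{i_k}$ and $k$ minimal; $R(w)$ is the set of reduced words. A braid move replaces a factor (consecutive letters) $i(i+1)i$ by $(i+1)i(i+1)$ or vice versa; a commutation move replaces a factor $ij$ with $|i-j|>1$ by $ji$. $B(w)$ (resp. $C(w)$) is the set of equivalence classes of $R(w)$ under sequences of braid moves (resp. commutation moves). Let $\Gamma(w)$ be the simple graph with vertex set $B(w)\sqcup C(w)$, with an edge between $B\in B(w)$ and $C\in C(w)$ if and only if $B\cap C\neq\emptyset$. The permutation $w$ is circuit-free if $\Gamma(w)$ contains no cycle (i.e. $\Gamma(w)$ is a forest; it is in fact connected, so this means it is a tree). *)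

(* Defs.v *)
From HB Require Import structures.
From mathcomp Require Import all_boot all_order all_fingroup.
From mathcomp Require Import boolp.
From Stdlib Require Import ClassicalEpsilon.

Set Implicit Arguments.
Unset Strict Implicit.
Unset Printing Implicit Defensive.

Section Words.
Variable n : nat.

(* Letters are elements i : 'I_n with 0 < i; the letter i stands for the
   adjacent transposition s_i = (i-1 i) of 'I_n = {0,...,n-1}, i.e. s_i
   exchanges the i-th and (i+1)-th points of {1,...,n}. *)
Definition pred_ord (i : 'I_n) : 'I_n :=
  Ordinal (leq_ltn_trans (leq_pred i) (ltn_ord i)).

Definition sadj (i : 'I_n) : 'S_n := tperm (pred_ord i) i.

Definition word_ok (s : seq 'I_n) : bool := all (fun i : 'I_n => 0 < val i) s.

Definition prodw (s : seq 'I_n) : 'S_n := (\prod_(i <- s) sadj i)%g.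

Definition has_word_len (w : 'S_n) (k : nat) : bool :=
  [exists t : k.-tuple 'I_n, word_ok t && (prodw t == w)].

Definition len (w : 'S_n) : nat :=
  match excluded_middle_informative (exists k, has_word_len w k) with
  | left h => ex_minn h
  | right _ => 0
  end.

Definition Rw (w : 'S_n) : {set (len w).-tuple 'I_n} :=
  [set t : (len w).-tuple 'I_n | word_ok t && (prodw t == w)].

Definition braid_move (s t : seq 'I_n) : Prop :=
  exists (p q : seq 'I_n) (a b : 'I_n),
    (val b = (val a).+1 \/ val a = (val b).+1) /\
    s = p ++ [:: a; b; a] ++ q /\ t = p ++ [:: b; a; b] ++ q.

Definition comm_move (s t : seq 'I_n) : Prop :=
  exists (p q : seq 'I_n) (a b : 'I_n),
    ((val a).+1 < val b \/ (val b).+1 < val a) /\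
    s = p ++ [:: a; b] ++ q /\ t = p ++ [:: b; a] ++ q.

Definition braid_rel (w : 'S_n) : rel ((len w).-tuple 'I_n) :=
  fun s t => [&& s \in Rw w, t \in Rw w & `[< braid_move s t >]].
Definition comm_rel (w : 'S_n) : rel ((len w).-tuple 'I_n) :=
  fun s t => [&& s \in Rw w, t \in Rw w & `[< comm_move s t >]].

Arguments braid_rel : clear implicits.
Arguments comm_rel : clear implicits.

Definition Bw (w : 'S_n) : {set {set (len w).-tuple 'I_n}} :=
  equivalence_partition (connect (braid_rel w)) (Rw w).
Definition Cw (w : 'S_n) : {set {set (len w).-tuple 'I_n}} :=
  equivalence_partition (connect (comm_rel w)) (Rw w).

Definition Gvert (w : 'S_n) : finType :=
  ({set (len w).-tuple 'I_n} + {set (len w).-tuple 'I_n})%type.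

Definition Gadj (w : 'S_n) : rel (Gvert w) :=
  fun u v =>
    match u, v with
    | inl B, inr C => [&& B \in Bw w, C \in Cw w & B :&: C != set0]
    | inr C, inl B => [&& B \in Bw w, C \in Cw w & B :&: C != set0]
    | _, _ => false
    end.

Arguments Gadj : clear implicits.

Definition Gamma_has_cycle (w : 'S_n) : Prop :=
  exists p : seq (Gvert w), [/\ 3 <= size p, uniq p & path.cycle (Gadj w) p].

Definition circuit_free (w : 'S_n) : Prop := ~ Gamma_has_cycle w.

End Words.

(* Main.v *)
Require Import Defs.
From mathcomp Require Import all_boot all_order all_fingroup.
From mathcomp Require Import zify.
From mathcomp Require Import boolp.
From Stdlib Require Import ClassicalEpsilon.
From Stdlib Require Import Relation_Operators Operators_Properties.
Set Implicit Arguments. Unset Strict Implicit. Unset Printing Implicit Defensive.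

Section Basic.
Variable n : nat.
Implicit Types (P Q : 'S_n) (a b : 'I_n) (s t : seq 'I_n).

Lemma val_pred_ord a : nat_of_ord (pred_ord a) = (nat_of_ord a).-1.
Proof. by []. Qed.

Lemma prodw_nil : prodw ([::] : seq 'I_n) = 1%g.
Proof. by rewrite /prodw big_nil. Qed.
Lemma prodw_cons a s : prodw (a :: s) = (sadj a * prodw s)%g.
Proof. by rewrite /prodw big_cons. Qed.
Lemma prodw_rcons s a : prodw (rcons s a) = (prodw s * sadj a)%g.
Proof. by rewrite /prodw big_rcons. Qed.
Lemma prodw_cat s t : prodw (s ++ t) = (prodw s * prodw t)%g.
Proof. by rewrite /prodw big_cat. Qed.
Lemma sadj2 a : (sadj a * sadj a = 1)%g.
Proof. by rewrite /sadj tperm2. Qed.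
Lemma sadjV a : ((sadj a)^-1 = sadj a)%g.
Proof. by rewrite /sadj tpermV. Qed.

Lemma sadj_val a (u : 'I_n) : 0 < nat_of_ord a ->
  nat_of_ord (sadj a u) = if nat_of_ord u == (nat_of_ord a).-1 then nat_of_ord a
                   else if nat_of_ord u == nat_of_ord a then (nat_of_ord a).-1 else nat_of_ord u.
Proof.
move=> a0; rewrite /sadj; case: tpermP => [->|->|].
- by rewrite val_pred_ord eqxx.
- have -> : (nat_of_ord a == (nat_of_ord a).-1) = false by apply/eqP; lia.
  by rewrite eqxx.
- move=> h1 h2.
  have -> : (nat_of_ord u == (nat_of_ord a).-1) = false.
    by apply/eqP => h; apply: h1; apply: val_inj; rewrite /= h.
  have -> : (nat_of_ord u == nat_of_ord a) = false by apply/eqP => h; apply: h2; apply: val_inj.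
  by [].
Qed.

Definition invs P : {set 'I_n * 'I_n} := [set p : 'I_n * 'I_n | (p.1 < p.2) && (P p.2 < P p.1)].
Definition ninv P := #|invs P|.
Definition cross P a : 'I_n * 'I_n :=
  let x := (P^-1)%g (pred_ord a) in let y := (P^-1)%g a in
  if x < y then (x, y) else (y, x).

Lemma eq_permV P (x z : 'I_n) : (x == (P^-1)%g z) = (P x == z).
Proof. by apply/eqP/eqP => [->|<-]; rewrite ?permKV ?permK. Qed.

Lemma sadj_lt a (u v : 'I_n) : 0 < nat_of_ord a -> u != v ->
  (sadj a v < sadj a u) =
  (v < u) (+) (((nat_of_ord u == (nat_of_ord a).-1) && (nat_of_ord v == nat_of_ord a)) ||
                ((nat_of_ord u == nat_of_ord a) && (nat_of_ord v == (nat_of_ord a).-1))).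
Proof.
move=> a0 /eqP uv.
have uv' : nat_of_ord u <> nat_of_ord v by move=> h; apply: uv; apply: val_inj.
rewrite !sadj_val //.
case: (nat_of_ord u =P (nat_of_ord a).-1) => hu; case: (nat_of_ord u =P nat_of_ord a) => hu'; 
case: (nat_of_ord v =P (nat_of_ord a).-1) => hv; case: (nat_of_ord v =P nat_of_ord a) => hv' /=;
  try lia; rewrite ?hu ?hu' ?hv ?hv'; try lia;
  repeat (case: ltnP => ?); try done; try (exfalso; lia).

Qed.

Lemma in_cross P a p : 0 < nat_of_ord a ->
  (p == cross P a) = (p.1 < p.2) &&
     (((nat_of_ord (P p.1) == (nat_of_ord a).-1) && (nat_of_ord (P p.2) == nat_of_ord a)) ||
      ((nat_of_ord (P p.1) == nat_of_ord a) && (nat_of_ord (P p.2) == (nat_of_ord a).-1))).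
Proof.
move=> a0; case: p => x y /=.
have E1 : forall z : 'I_n, (z == (P^-1)%g (pred_ord a)) = (nat_of_ord (P z) == (nat_of_ord a).-1).
  by move=> z; rewrite eq_permV -val_eqE.
have E2 : forall z : 'I_n, (z == (P^-1)%g a) = (nat_of_ord (P z) == nat_of_ord a).
  by move=> z; rewrite eq_permV -val_eqE.
rewrite /cross; set X := (P^-1)%g (pred_ord a); set Y := (P^-1)%g a.
have XY : X != Y.
  apply/eqP => h; have := congr1 (fun z => nat_of_ord (P z)) h.
  rewrite /X /Y !permKV /=; lia.
case: ltnP => hXY; apply/idP/idP.
- case/eqP=> -> ->; rewrite hXY /X /Y !permKV val_pred_ord !eqxx /=; by [].
- case/andP=> hxy /orP [/andP [h1 h2]|/andP [h1 h2]].
  + by rewrite xpair_eqE E1 E2 h1 h2.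
  + rewrite -E2 in h1; rewrite -E1 in h2; move: h1 h2 => /eqP h1 /eqP h2.
    subst; rewrite /X /Y in hXY; exfalso; lia.
- case/eqP=> -> ->; rewrite /X /Y !permKV val_pred_ord !eqxx /= orbT andbT.
  rewrite ltn_neqAle hXY andbT; by rewrite eq_sym.
- case/andP=> hxy /orP [/andP [h1 h2]|/andP [h1 h2]].
  + rewrite -E2 in h2; rewrite -E1 in h1; move: h1 h2 => /eqP h1 /eqP h2.
    subst; rewrite /X /Y in hXY; exfalso; lia.
  + by rewrite xpair_eqE E1 E2 h1 h2.
Qed.


Lemma in_invs_sadj P a p : 0 < a ->
  (p \in invs (P * sadj a)%g) = (p \in invs P) (+) (p == cross P a).
Proof.
move=> a0; rewrite in_cross // !inE !permM.
case: (ltnP p.1 p.2) => h //=.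
rewrite sadj_lt //.
apply/eqP => /perm_inj E; by rewrite E ltnn in h.
Qed.

Lemma invs_sadj P a : 0 < a ->
  invs (P * sadj a)%g = if cross P a \in invs P then invs P :\ cross P a
                        else cross P a |: invs P.
Proof.
move=> a0; apply/setP => p; rewrite in_invs_sadj //.
case: ifP => hc.
- rewrite in_setD1; case: (p =P cross P a) => [->|_] /=; by rewrite ?hc ?eqxx ?addbF.
- rewrite in_setU1; case: (p =P cross P a) => [->|_] /=; by rewrite ?hc ?eqxx ?addbF.
Qed.

Lemma ninv_sadj P a : 0 < a ->
  ninv (P * sadj a)%g = if cross P a \in invs P then (ninv P).-1 else (ninv P).+1.
Proof.
move=> a0; rewrite /ninv invs_sadj //; case: ifP => hc.
- by rewrite [#|invs P|](cardsD1 (cross P a)) hc.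
- by rewrite cardsU1 hc.
Qed.

Lemma ninv_sadj_le P a : 0 < a -> ninv (P * sadj a)%g <= (ninv P).+1.
Proof. by move=> a0; rewrite ninv_sadj //; case: ifP => _; lia. Qed.

Lemma cross_invs P a : 0 < a ->
  (cross P a \in invs P) = ((P^-1)%g a < (P^-1)%g (pred_ord a)).
Proof.
move=> a0; rewrite /cross; case: ltnP => h; rewrite inE /= !permKV val_pred_ord.
- apply/idP/idP => [/andP [_ ?]|?]; lia.
- apply/idP/idP => [/andP [? _]|?] //. apply/andP; split => //; lia.
Qed.

Lemma ninv_bound s P : word_ok s -> ninv (P * prodw s)%g <= ninv P + size s.
Proof.
elim: s P => [|a s IH] P /=; first by rewrite prodw_nil mulg1 addn0.
case/andP=> a0 ok; rewrite prodw_cons mulgA.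
apply: (leq_trans (IH _ ok)); rewrite addnS -addSn leq_add2r; exact: ninv_sadj_le.
Qed.

Lemma ninv1 : ninv (1%g : 'S_n) = 0.
Proof.
apply/eqP; rewrite cards_eq0; apply/eqP/setP => p; rewrite !inE !perm1.
by case: ltngtP.
Qed.

Lemma mono_ge (f : 'S_n) : (forall x y : 'I_n, x < y -> f x < f y) ->
  forall x : 'I_n, x <= f x.
Proof.
move=> mono.
suff H : forall m (x : 'I_n), nat_of_ord x = m -> m <= f x by move=> x; apply: H.
elim=> [|m IH] x hx //.
have mn : m < n by have := ltn_ord x; lia.
have := IH (Ordinal mn) erefl.
have := mono (Ordinal mn) x; rewrite /= hx ltnSn => /(_ isT); lia.
Qed.

Lemma ninv0 P : ninv P = 0 -> P = 1%g.
Proof.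
move/eqP; rewrite cards_eq0 => /eqP h0.
have mono : forall x y : 'I_n, x < y -> P x < P y.
  move=> x y xy; case: ltngtP => // h.
  - have : (x, y) \in invs P by rewrite inE /= xy h.
    by rewrite h0 inE.
  - by move/val_inj/perm_inj: h => E; rewrite E ltnn in xy.
have monoV : forall x y : 'I_n, x < y -> (P^-1)%g x < (P^-1)%g y.
  move=> x y xy; case: ltngtP => // h.
  - have := mono _ _ h; rewrite !permKV => ?; lia.
  - by move/val_inj/perm_inj: h => E; rewrite E ltnn in xy.
apply/permP => x; rewrite perm1; apply: val_inj => /=.
have h1 := mono_ge mono x.
have := mono_ge monoV (P x); rewrite permK => ?; lia.
Qed.

Lemma nat_descent (g : nat -> nat) i j : i < j -> g j < g i ->
  exists m, i < m <= j /\ g m < g m.-1.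
Proof.
elim: j => [|j IH] // ij gji.
case: (ltnP (g j.+1) (g j)) => h.
  by exists j.+1; split => //; lia.
have ij' : i < j \/ i = j by lia.
case: ij' => [ij'|ij'].
  have [m [hm1 hm2]] := IH ij' (leq_ltn_trans h gji).
  by exists m; split => //; lia.
subst; lia.
Qed.

Lemma descent_exists P : 0 < ninv P ->
  exists a : 'I_n, 0 < a /\ (P^-1)%g a < (P^-1)%g (pred_ord a).
Proof.
rewrite card_gt0 => /set0Pn [[x y]]; rewrite inE /= => /andP [xy yx].
pose g m := if (insub m : option 'I_n) is Some o then nat_of_ord ((P^-1)%g o) else 0.
have gi : g (P y) = y by rewrite /g valK permK.
have gj : g (P x) = x by rewrite /g valK permK.
have [m [hm1 hm2]] : exists m, P y < m <= P x /\ g m < g m.-1.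
  by apply: nat_descent => //; rewrite gi gj.
have mn : m < n by have := ltn_ord (P x); lia.
have mn' : m.-1 < n by lia.
exists (Ordinal mn); split => /=; first lia.
have -> : pred_ord (Ordinal mn) = Ordinal mn'.
  by apply: val_inj.
move: hm2; rewrite /g (insubT (fun k => k < n) mn) (insubT (fun k => k < n) mn').
by [].
Qed.

Lemma word_exists P : exists s, [&& word_ok s, size s == ninv P & prodw s == P].
Proof.
move: {2}(ninv P) (erefl (ninv P)) => k; elim: k P => [|k IH] P hk.
  by exists [::]; rewrite /= hk prodw_nil (ninv0 hk) !eqxx.
have := descent_exists (P := P); rewrite hk => /(_ isT) [a [a0 da]].
have hk' : ninv (P * sadj a)%g = k.
  by rewrite ninv_sadj // cross_invs // da hk.
have [s /and3P [ok sz pr]] := IH _ hk'.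
exists (rcons s a); rewrite /word_ok all_rcons a0 /=.
rewrite size_rcons (eqP sz) prodw_rcons (eqP pr) -mulgA sadj2 mulg1 hk'.
by rewrite !eqxx !andbT.
Qed.

Lemma len_ninv P : len P = ninv P.
Proof.
have hw : has_word_len P (ninv P).
  have [s /and3P [ok sz pr]] := word_exists P.
  apply/existsP; exists (Tuple sz); by rewrite /= ok pr.
have lb : forall k, has_word_len P k -> ninv P <= k.
  move=> k /existsP [t /andP [ok /eqP pr]].
  have := ninv_bound 1%g ok; rewrite mul1g pr ninv1 size_tuple; by [].
rewrite /len; case: excluded_middle_informative => [h|h]; last first.
  by exfalso; apply: h; exists (ninv P).
case: ex_minnP => m hm hmin.
have := hmin _ hw; have := lb _ hm; lia.
Qed.

End Basic.

Section Cross.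
Variable n : nat.
Implicit Types (P Q : 'S_n) (a b : 'I_n) (s t : seq 'I_n).

Fixpoint crsP P s : seq ('I_n * 'I_n) :=
  if s is a :: t then cross P a :: crsP (P * sadj a)%g t else [::].

Lemma size_crsP P s : size (crsP P s) = size s.
Proof. by elim: s P => [|a s IH] P //=; rewrite IH. Qed.

Lemma crsP_cat P s t : crsP P (s ++ t) = crsP P s ++ crsP (P * prodw s)%g t.
Proof.
elim: s P => [|a s IH] P /=; first by rewrite prodw_nil mulg1.
by rewrite IH prodw_cons mulgA.
Qed.

Lemma cross_max P a : maxn (P (cross P a).1) (P (cross P a).2) = a.
Proof. rewrite /cross; case: ifP => _ /=; rewrite !permKV val_pred_ord; lia. Qed.

Lemma crsP_inj P s t : crsP P s = crsP P t -> s = t.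
Proof.
elim: s P t => [|a s IH] P [|b t] //= [e1 e2].
have ab : a = b by apply: val_inj; rewrite /= -(cross_max P a) -(cross_max P b) e1.
subst b; by rewrite (IH _ _ e2).
Qed.

Lemma crsP_incr s P : word_ok s -> ninv (P * prodw s)%g = ninv P + size s ->
  [/\ uniq (crsP P s),
      {in crsP P s, forall c, (c \in invs (P * prodw s)%g) && (c \notin invs P)} &
      invs P \subset invs (P * prodw s)%g].
Proof.
elim: s P => [|a s IH] P /=.
  by move=> _ _; rewrite prodw_nil mulg1; split => //; apply: subxx.
case/andP=> a0 ok; rewrite prodw_cons mulgA => heq.
have hb := ninv_bound (P * sadj a)%g ok.
have hs := ninv_sadj P a0.
have hc : cross P a \notin invs P.
  apply/negP => hc; rewrite hc in hs.
  move: hb heq hs; set A := ninv (_ * prodw s)%g; set B := ninv (P * sadj a)%g; lia.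
rewrite (negbTE hc) in hs.
have heq' : ninv (P * sadj a * prodw s)%g = ninv (P * sadj a)%g + size s.
  move: hb heq hs; set A := ninv (_ * prodw s)%g; set B := ninv (P * sadj a)%g; lia.
have [u1 u2 u3] := IH _ ok heq'.
have inv1 : invs (P * sadj a)%g = cross P a |: invs P.
  by rewrite invs_sadj // (negbTE hc).
have sub1 : invs P \subset invs (P * sadj a)%g by rewrite inv1 subsetUr.
have cin : cross P a \in invs (P * sadj a)%g by rewrite inv1 setU11.
split.
- rewrite u1 andbT; apply/negP => /u2 /andP [_ /negP]; by apply.
- move=> c; rewrite inE => /orP [/eqP ->|/u2 /andP [h1 h2]].
  + by rewrite hc andbT (subsetP u3).
  + rewrite h1 /=; apply: contra h2; exact: (subsetP sub1).
- exact: subset_trans sub1 u3.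
Qed.

Lemma permV_sadj P a (z : 'I_n) : ((P * sadj a)^-1)%g z = (P^-1)%g (sadj a z).
Proof. by rewrite invMg permM sadjV. Qed.

Definition disj (c d : 'I_n * 'I_n) :=
  [&& c.1 != d.1, c.1 != d.2, c.2 != d.1 & c.2 != d.2].

Definition sortp (x y : 'I_n) := if x < y then (x, y) else (y, x).

Lemma crossE P a : cross P a = sortp ((P^-1)%g (pred_ord a)) ((P^-1)%g a).
Proof. by []. Qed.

Lemma sortpC x y : x != y -> sortp x y = sortp y x.
Proof.
move=> xy; rewrite /sortp; case: (boolP (x < y)) => h1; case: (boolP (y < x)) => h2 //=.
- exfalso; lia.
- have E : nat_of_ord x = y by lia.
  by move/val_inj: E => E; rewrite E eqxx in xy.
Qed.

Lemma disj_sortp x y x' y' :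
  [&& x != x', x != y', y != x' & y != y'] -> disj (sortp x y) (sortp x' y').
Proof.
rewrite /disj /sortp => /and4P [h1 h2 h3 h4].
by case: ifP => _; case: ifP => _ /=; rewrite ?h1 ?h2 ?h3 ?h4 // eq_sym ?h1 ?h2 ?h3 ?h4.
Qed.

Lemma ndisj_sortp (x y w : 'I_n) : ~~ disj (sortp x y) (sortp x w).
Proof. rewrite /disj /sortp; by case: ifP => _; case: ifP => _ /=; rewrite eqxx ?andbF. Qed.


Ltac split_ifs := repeat match goal with
 | |- context [if (nat_of_ord ?x == ?y) then _ else _] => case: (nat_of_ord x =P y) => ? /=
 | |- context [if ((nat_of_ord ?x).-1 == ?y) then _ else _] => case: ((nat_of_ord x).-1 =P y) => ? /=
 end.
Ltac ordtac := apply/val_inj => /=; rewrite ?val_pred_ord ?sadj_val //= ?val_pred_ord;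
  split_ifs; lia.

Lemma sadj_comm a b : 0 < a -> 0 < b -> (nat_of_ord a).+1 < b \/ (nat_of_ord b).+1 < a ->
  (sadj a * sadj b = sadj b * sadj a)%g.
Proof.
move=> a0 b0 ab; apply/permP => z; rewrite !permM.
apply/val_inj => /=; rewrite !sadj_val //; split_ifs; lia.
Qed.

Lemma sadj_braid a b : 0 < a -> nat_of_ord b = (nat_of_ord a).+1 ->
  (sadj a * sadj b * sadj a = sadj b * sadj a * sadj b)%g.
Proof.
move=> a0 ab; have b0 : 0 < b by lia.
apply/permP => z; rewrite !permM.
apply/val_inj => /=; rewrite !sadj_val //; split_ifs; lia.
Qed.

Lemma disjC c d : disj c d = disj d c.
Proof.
by apply/idP/idP => /and4P [h1 h2 h3 h4]; apply/and4P; split; rewrite eq_sym; assumption.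
Qed.

Lemma mem_sortp1 x y : (x == (sortp x y).1) || (x == (sortp x y).2).
Proof. by rewrite /sortp; case: ifP => _ /=; rewrite eqxx ?orbT. Qed.
Lemma mem_sortp2 x y : (y == (sortp x y).1) || (y == (sortp x y).2).
Proof. by rewrite /sortp; case: ifP => _ /=; rewrite eqxx ?orbT. Qed.

Lemma ndisj_share z c d : (z == c.1) || (z == c.2) -> (z == d.1) || (z == d.2) ->
  ~~ disj c d.
Proof.
rewrite /disj => /orP [] /eqP <- /orP [] /eqP <-; by rewrite eqxx ?andbF.
Qed.

Lemma crs_comm P a b : 0 < a -> 0 < b -> (nat_of_ord a).+1 < b \/ (nat_of_ord b).+1 < a ->
  exists c1 c2, [/\ disj c1 c2, crsP P [:: a; b] = [:: c1; c2] &
                   crsP P [:: b; a] = [:: c2; c1]].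
Proof.
move=> a0 b0 ab; exists (cross P a), (cross P b); split.
- rewrite !crossE; apply: disj_sortp.
  rewrite !(inj_eq perm_inj) -!val_eqE /=.
  apply/and4P; split; apply/eqP; lia.
- rewrite /= !crossE !permV_sadj.
  have -> : sadj a (pred_ord b) = pred_ord b by ordtac.
  have -> : sadj a b = b by ordtac.
  by [].
- rewrite /= !crossE !permV_sadj.
  have -> : sadj b (pred_ord a) = pred_ord a by ordtac.
  have -> : sadj b a = a by ordtac.
  by [].
Qed.

Lemma crs_braid0 P a b : 0 < a -> nat_of_ord b = (nat_of_ord a).+1 ->
  let X := (P^-1)%g (pred_ord a) in let Y := (P^-1)%g a in let Z := (P^-1)%g b in
  crsP P [:: a; b; a] = [:: sortp X Y; sortp X Z; sortp Y Z] /\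
  crsP P [:: b; a; b] = [:: sortp Y Z; sortp X Z; sortp X Y].
Proof.
move=> a0 ab X Y Z; have b0 : 0 < b by lia.
have pb : pred_ord b = a by ordtac.
split; rewrite /= !crossE !permV_sadj.
- have -> : sadj a (pred_ord b) = pred_ord a by ordtac.
  have -> : sadj a b = b by ordtac.
  have -> : sadj a (sadj b (pred_ord a)) = a by ordtac.
  have -> : sadj a (sadj b a) = b by ordtac.
  by [].
- have -> : sadj b (pred_ord a) = pred_ord a by ordtac.
  have -> : sadj b a = b by ordtac.
  have -> : sadj b (sadj a (pred_ord b)) = pred_ord a by ordtac.
  have -> : sadj b (sadj a b) = a by ordtac.
  by rewrite pb.
Qed.

Lemma crs_braid P a b : 0 < a -> 0 < b ->
  nat_of_ord b = (nat_of_ord a).+1 \/ nat_of_ord a = (nat_of_ord b).+1 ->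
  exists c1 c2 c3, [/\ [&& ~~ disj c1 c2, ~~ disj c1 c3 & ~~ disj c2 c3],
     crsP P [:: a; b; a] = [:: c1; c2; c3] & crsP P [:: b; a; b] = [:: c3; c2; c1]].
Proof.
have key : forall a b, 0 < a -> nat_of_ord b = (nat_of_ord a).+1 ->
  exists c1 c2 c3, [/\ [&& ~~ disj c1 c2, ~~ disj c1 c3 & ~~ disj c2 c3],
     crsP P [:: a; b; a] = [:: c1; c2; c3] & crsP P [:: b; a; b] = [:: c3; c2; c1]].
  move=> a' b' a0 ab; have [e1 e2] := crs_braid0 P a0 ab.
  set X := (P^-1)%g (pred_ord a'); set Y := (P^-1)%g a'; set Z := (P^-1)%g b'.
  exists (sortp X Y), (sortp X Z), (sortp Y Z); split => //.
  apply/and3P; split.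
  - exact: (ndisj_share (mem_sortp1 X Y) (mem_sortp1 X Z)).
  - exact: (ndisj_share (mem_sortp2 X Y) (mem_sortp1 Y Z)).
  - exact: (ndisj_share (mem_sortp2 X Z) (mem_sortp2 Y Z)).
move=> a0 b0 [ab|ba].
- exact: key.
- have [c1 [c2 [c3 [h e1 e2]]]] := key b a b0 ba.
  exists c3, c2, c1; split => //.
  rewrite !(disjC c3) (disjC c2 c1). case/and3P: h => h1 h2 h3. by rewrite h1 h2 h3.
Qed.

End Cross.

Section Ord.
Variable T : eqType.
Implicit Types (c d e p q m : seq T).

Definition ordpres (R : T -> T -> bool) c d :=
  forall x y, x \in c -> y \in c -> R x y ->
    (index x c < index y c) = (index x d < index y d).

Lemma ordpres_refl R c : ordpres R c c.
Proof. by []. Qed.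

Lemma ordpres_trans R c d e : perm_eq c d -> ordpres R c d -> ordpres R d e ->
  ordpres R c e.
Proof.
move=> pcd h1 h2 x y xc yc r; rewrite (h1 _ _ xc yc r) h2 //; by rewrite -(perm_mem pcd).
Qed.

Lemma ordpres_seg R p m m' q : perm_eq m m' ->
  (forall x y, x \in m -> y \in m -> x != y -> ~~ R x y) ->
  ordpres R (p ++ m ++ q) (p ++ m' ++ q).
Proof.
move=> pm hm x y _ _ r.
case: (eqVneq x y) => [->|xy]; first by rewrite !ltnn.
have Hb : forall z (s : seq T), z \in s -> index z s < size s.
  by move=> z s; rewrite index_mem.
have Em : m' =i m by move=> z; rewrite (perm_mem pm).
rewrite !index_cat !Em -(perm_size pm).
case: (boolP (x \in p)) => xp; case: (boolP (y \in p)) => yp.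
- by [].
- have := Hb _ _ xp; case: (boolP (y \in m)) => ym; lia.
- have := Hb _ _ yp; case: (boolP (x \in m)) => xm; lia.
case: (boolP (x \in m)) => xm; case: (boolP (y \in m)) => ym.
- by have := hm _ _ xm ym xy; rewrite r.
- have xm' : x \in m' by rewrite Em.
  have := Hb _ _ xm; have := Hb _ _ xm'; rewrite (perm_size pm); lia.
- have ym' : y \in m' by rewrite Em.
  have := Hb _ _ ym; have := Hb _ _ ym'; rewrite (perm_size pm); lia.
- by rewrite ltn_add2l.
Qed.

Lemma ord_eq c d : uniq c -> perm_eq c d ->
  (forall x y, x \in c -> y \in c -> (index x c < index y c) = (index x d < index y d)) ->
  c = d.
Proof.
elim: c d => [|x c IH] [|y d] //.
- by move=> _ /perm_size.
- by move=> _ /perm_size.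
move=> /= /andP [xc uc] pcd h.
have yx : y = x.
  apply/eqP; apply/negP => /negP yx.
  have yin : y \in x :: c by rewrite (perm_mem pcd) mem_head.
  have := h x y (mem_head _ _) yin.
  by rewrite /= eqxx eq_sym (negbTE yx) /= eqxx.
subst y; congr (_ :: _); apply: IH => //.
- by rewrite perm_cons in pcd.
- have ud : uniq (x :: d) by rewrite -(perm_uniq pcd) /= xc.
  move: ud => /= /andP [xd _].
  move=> u v uc' vc'; have := h u v (mem_behead (s := x :: c) uc') (mem_behead (s := x :: c) vc') => /=.
  have ux : (x == u) = false by apply/negbTE; apply: contra xc => /eqP ->.
  have vx : (x == v) = false by apply/negbTE; apply: contra xc => /eqP ->.
  by rewrite ux vx !ltnS.
Qed.


End Ord.

Section Inter.
Variable n : nat.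
Variable w : 'S_n.
Implicit Types (s t : (len w).-tuple 'I_n).

Lemma Rw_E s : (s \in Rw w) = word_ok s && (prodw s == w).
Proof. by rewrite inE. Qed.

Lemma crs_uniq s : s \in Rw w -> uniq (crsP 1%g (val s)).
Proof.
rewrite Rw_E => /andP [ok /eqP pr].
have hs : size s = ninv w by rewrite size_tuple len_ninv.
have := crsP_incr (P := 1%g) ok; rewrite mul1g ninv1 add0n pr hs.
by move=> /(_ erefl) [u _ _].
Qed.

Lemma word_ok_cat (p q : seq 'I_n) : word_ok (p ++ q) = word_ok p && word_ok q.
Proof. by rewrite /word_ok all_cat. Qed.

Lemma braid_step (s t : seq 'I_n) : word_ok s -> braid_move s t ->
  perm_eq (crsP 1%g s) (crsP 1%g t) /\ ordpres (@disj n) (crsP 1%g s) (crsP 1%g t).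
Proof.
move=> ok [p [q [a [b [ab [es et]]]]]].
move: ok; rewrite es => ok.
move: ok; rewrite !word_ok_cat => /and3P [_ okm _].
move: okm => /and4P [a0 b0 _ _].
have [c1 [c2 [c3 [hd e1 e2]]]] := crs_braid (prodw p) a0 b0 ab.
have hp : prodw [:: a; b; a] = prodw [:: b; a; b].
  rewrite !prodw_cons prodw_nil !mulg1 !mulgA.
  case: ab => ab; [exact: sadj_braid|exact/esym/sadj_braid].
rewrite et !crsP_cat !mul1g e1 e2 hp.
split.
- rewrite perm_cat2l perm_cat2r.
  have -> : [:: c3; c2; c1] = rev [:: c1; c2; c3] by [].
  by rewrite perm_sym perm_rev.
- apply: ordpres_seg.
  + have -> : [:: c3; c2; c1] = rev [:: c1; c2; c3] by [].
    by rewrite perm_sym perm_rev.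
  + case/and3P: hd => h1 h2 h3.
    move=> x y; rewrite !inE => /or3P [] /eqP -> /or3P [] /eqP ->;
    rewrite ?eqxx // => _; by rewrite // disjC.
Qed.

Lemma comm_step (s t : seq 'I_n) : word_ok s -> comm_move s t ->
  perm_eq (crsP 1%g s) (crsP 1%g t) /\
  ordpres (fun x y => ~~ @disj n x y) (crsP 1%g s) (crsP 1%g t).
Proof.
move=> ok [p [q [a [b [ab [es et]]]]]].
move: ok; rewrite es => ok.
move: ok; rewrite !word_ok_cat => /and3P [_ okm _].
move: okm => /and3P [a0 b0 _].
have [c1 [c2 [hd e1 e2]]] := crs_comm (prodw p) a0 b0 ab.
have hp : prodw [:: a; b] = prodw [:: b; a].
  rewrite !prodw_cons prodw_nil !mulg1; exact: sadj_comm.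
rewrite et !crsP_cat !mul1g e1 e2 hp.
split.
- rewrite perm_cat2l perm_cat2r.
  have -> : [:: c2; c1] = rev [:: c1; c2] by [].
  by rewrite perm_sym perm_rev.
- apply: ordpres_seg.
  + have -> : [:: c2; c1] = rev [:: c1; c2] by [].
    by rewrite perm_sym perm_rev.
  + move=> x y; rewrite !inE => /orP [] /eqP -> /orP [] /eqP ->;
    rewrite ?eqxx // => _; by rewrite negbK // disjC.
Qed.

Lemma braid_conn s t : connect (@braid_rel n w) s t ->
  perm_eq (crsP 1%g s) (crsP 1%g t) /\ ordpres (@disj n) (crsP 1%g s) (crsP 1%g t).
Proof.
case/connectP => p hp ->; elim: p s hp => [|y p IH] s /=.
  by move=> _; split => //; apply: ordpres_refl.
case/andP => /and3P [sR yR /asboolP bm] hp.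
have ok : word_ok s by move: sR; rewrite Rw_E => /andP [].
have [p1 o1] := braid_step ok bm.
have [p2 o2] := IH _ hp.
split; first exact: perm_trans p1 p2.
exact: ordpres_trans p1 o1 o2.
Qed.

Lemma comm_conn s t : connect (@comm_rel n w) s t ->
  perm_eq (crsP 1%g s) (crsP 1%g t) /\
  ordpres (fun x y => ~~ @disj n x y) (crsP 1%g s) (crsP 1%g t).
Proof.
case/connectP => p hp ->; elim: p s hp => [|y p IH] s /=.
  by move=> _; split => //; apply: ordpres_refl.
case/andP => /and3P [sR yR /asboolP bm] hp.
have ok : word_ok s by move: sR; rewrite Rw_E => /andP [].
have [p1 o1] := comm_step ok bm.
have [p2 o2] := IH _ hp.
split; first exact: perm_trans p1 p2.
exact: ordpres_trans p1 o1 o2.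
Qed.

Lemma BC_inter s t : s \in Rw w ->
  connect (@braid_rel n w) s t -> connect (@comm_rel n w) s t -> s = t.
Proof.
move=> sR hb hc.
have [pb ob] := braid_conn hb.
have [_ oc] := comm_conn hc.
apply: val_inj; apply: (@crsP_inj _ 1%g).
apply: ord_eq => //; first exact: crs_uniq.
move=> x y xs ys; case: (boolP (@disj n x y)) => d.
- exact: ob.
- exact: oc.
Qed.

End Inter.

Ltac split_ifs := repeat match goal with
 | |- context [if (nat_of_ord ?x == ?y) then _ else _] => case: (nat_of_ord x =P y) => ? /=
 | |- context [if ((nat_of_ord ?x).-1 == ?y) then _ else _] => case: ((nat_of_ord x).-1 =P y) => ? /=
 end.
Ltac ordtac := apply/val_inj => /=; rewrite ?val_pred_ord ?sadj_val //= ?val_pred_ord;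
  split_ifs; lia.

Section Mats.
Variable n : nat.
Implicit Types (P Q : 'S_n) (a b : 'I_n) (s t u : seq 'I_n).

Definition RW P s := [&& word_ok s, size s == ninv P & prodw s == P].

Definition MV P s t : Prop := RW P s /\ RW P t /\ (braid_move s t \/ comm_move s t).

Definition crt P := clos_refl_trans _ (MV P).

Lemma braid_move_sym s t : braid_move s t -> braid_move t s.
Proof.
case=> [p [q [a [b [ab [-> ->]]]]]]; exists p, q, b, a; split => //; lia.
Qed.
Lemma comm_move_sym s t : comm_move s t -> comm_move t s.
Proof.
case=> [p [q [a [b [ab [-> ->]]]]]]; exists p, q, b, a; split => //; lia.
Qed.

Lemma crt_sym P s t : crt P s t -> crt P t s.
Proof.
elim=> [x y [h1 [h2 h3]]| x | x y z _ h1 _ h2].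
- apply: rt_step; split => //; split => //.
  by case: h3 => h; [left; apply: braid_move_sym|right; apply: comm_move_sym].
- exact: rt_refl.
- exact: rt_trans h2 h1.
Qed.

Lemma sadjK a (g : 'S_n) : (sadj a * (sadj a * g) = g)%g.
Proof. by rewrite mulgA sadj2 mul1g. Qed.

Lemma desc_ninv P a : 0 < a -> (P^-1)%g a < (P^-1)%g (pred_ord a) ->
  ninv (P * sadj a)%g = (ninv P).-1 /\ 0 < ninv P.
Proof.
move=> a0 d; have c : cross P a \in invs P by rewrite cross_invs.
split; first by rewrite ninv_sadj // c.
by rewrite /ninv card_gt0; apply/set0Pn; exists (cross P a).
Qed.

Lemma RW_rcons P s a : RW P (rcons s a) ->
  [/\ 0 < a, RW (P * sadj a)%g s, ninv P = (ninv (P * sadj a)%g).+1 &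
      (P^-1)%g a < (P^-1)%g (pred_ord a)].
Proof.
case/and3P; rewrite /word_ok all_rcons size_rcons prodw_rcons => /andP [a0 ok] /eqP sz /eqP pr.
have pr' : prodw s = (P * sadj a)%g by rewrite -pr -mulgA sadj2 mulg1.
have hb := ninv_bound 1%g ok; rewrite mul1g ninv1 pr' in hb.
have hs := ninv_sadj P a0.
have hc : cross P a \in invs P.
  case: (boolP (cross P a \in invs P)) => // hc; rewrite (negbTE hc) in hs.
  move: hs hb sz; set B := ninv (P * sadj a)%g; lia.
rewrite hc in hs.
have e : ninv P = (ninv (P * sadj a)%g).+1.
  move: hs hb sz; set B := ninv (P * sadj a)%g; lia.
split => //.
- apply/and3P; split => //; last by rewrite pr'.
  apply/eqP; move: e sz; set B := ninv (P * sadj a)%g; lia.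
- by rewrite -cross_invs.
Qed.

Lemma RW_rcons_intro Q s a : 0 < a -> RW Q s ->
  ninv (Q * sadj a)%g = (ninv Q).+1 -> RW (Q * sadj a)%g (rcons s a).
Proof.
move=> a0 /and3P [ok /eqP sz /eqP pr] e.
apply/and3P; split.
- by move: ok; rewrite /word_ok all_rcons a0.
- by rewrite size_rcons sz e.
- by rewrite prodw_rcons pr.
Qed.

Lemma MV_lift Q s t a : 0 < a -> ninv (Q * sadj a)%g = (ninv Q).+1 ->
  MV Q s t -> MV (Q * sadj a)%g (rcons s a) (rcons t a).
Proof.
move=> a0 e [h1 [h2 h3]]; split; first exact: RW_rcons_intro.
split; first exact: RW_rcons_intro.
case: h3 => [[p [q [x [y [xy [-> ->]]]]]]|[p [q [x [y [xy [-> ->]]]]]]].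
- left; exists p, (rcons q a), x, y; by rewrite !rcons_cat.
- right; exists p, (rcons q a), x, y; by rewrite !rcons_cat.
Qed.

Lemma crt_lift Q s t a : 0 < a -> ninv (Q * sadj a)%g = (ninv Q).+1 ->
  crt Q s t -> crt (Q * sadj a)%g (rcons s a) (rcons t a).
Proof.
move=> a0 e; elim=> [x y h| x | x y z _ h1 _ h2].
- by apply: rt_step; apply: MV_lift.
- exact: rt_refl.
- exact: rt_trans h1 h2.
Qed.


Lemma RW_intro Q R s a : 0 < a -> RW Q s -> R = (Q * sadj a)%g ->
  ninv R = (ninv Q).+1 -> RW R (rcons s a).
Proof. by move=> a0 h -> e; apply: RW_rcons_intro. Qed.

Lemma crt_lift' Q R s t a : 0 < a -> R = (Q * sadj a)%g -> ninv R = (ninv Q).+1 ->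
  crt Q s t -> crt R (rcons s a) (rcons t a).
Proof. by move=> a0 -> e; apply: crt_lift. Qed.

Lemma sadjKr P a : (P * sadj a * sadj a = P)%g.
Proof. by rewrite -mulgA sadj2 mulg1. Qed.

Definition IHk k := forall Q s t, ninv Q = k -> RW Q s -> RW Q t -> crt Q s t.

Lemma far_case k P s' t' a b : IHk k -> ninv P = k.+1 -> 0 < a -> 0 < b ->
  (nat_of_ord a).+1 < b \/ (nat_of_ord b).+1 < a ->
  RW (P * sadj a)%g s' -> RW (P * sadj b)%g t' ->
  ninv (P * sadj a)%g = k -> ninv (P * sadj b)%g = k ->
  (P^-1)%g a < (P^-1)%g (pred_ord a) -> (P^-1)%g b < (P^-1)%g (pred_ord b) ->
  crt P (rcons s' a) (rcons t' b).
Proof.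
move=> IH hk a0 b0 ab Rs Rt ka kb da db.
have comm := sadj_comm a0 b0 ab.
have db' : ((P * sadj a)^-1)%g b < ((P * sadj a)^-1)%g (pred_ord b).
  rewrite !permV_sadj.
  have -> : sadj a b = b by ordtac.
  have -> : sadj a (pred_ord b) = pred_ord b by ordtac.
  exact: db.
have [kx k0] := desc_ninv b0 db'.
set x := (P * sadj a * sadj b)%g in kx.
have [u /and3P [uok usz upr]] := word_exists x.
have Ru : RW x u by apply/and3P.
have xa : (x * sadj a = P * sadj b)%g.
  by rewrite /x -!mulgA; congr (_ * _)%g; rewrite mulgA comm -mulgA sadj2 mulg1.
have R1 : RW (P * sadj a)%g (rcons u b).
  apply: (RW_intro b0 Ru); first by rewrite /x sadjKr.
  rewrite kx ka; lia.
have R2 : RW (P * sadj b)%g (rcons u a).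
  apply: (RW_intro a0 Ru); first by rewrite xa.
  rewrite kx ka kb; lia.
have R1' : RW P (rcons (rcons u b) a).
  apply: (RW_intro a0 R1); first by rewrite sadjKr.
  rewrite ka hk.
  by [].
have R2' : RW P (rcons (rcons u a) b).
  apply: (RW_intro b0 R2); first by rewrite sadjKr.
  by rewrite kb hk.
have c1 : crt P (rcons s' a) (rcons (rcons u b) a).
  apply: (crt_lift' a0 (esym (sadjKr P a))); first by rewrite ka hk.
  exact: IH.
have c2 : crt P (rcons t' b) (rcons (rcons u a) b).
  apply: (crt_lift' b0 (esym (sadjKr P b))); first by rewrite kb hk.
  exact: IH.
apply: rt_trans c1 _; apply: rt_trans _ (crt_sym c2).
apply: rt_step; split => //; split => //; right.
exists u, [::], b, a; split; first by case: ab => ?; [right|left].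
by rewrite -!cats1 -!catA.
Qed.

Lemma adj_case k P s' t' a b : IHk k -> ninv P = k.+1 -> 0 < a ->
  nat_of_ord b = (nat_of_ord a).+1 ->
  RW (P * sadj a)%g s' -> RW (P * sadj b)%g t' ->
  ninv (P * sadj a)%g = k -> ninv (P * sadj b)%g = k ->
  (P^-1)%g a < (P^-1)%g (pred_ord a) -> (P^-1)%g b < (P^-1)%g (pred_ord b) ->
  crt P (rcons s' a) (rcons t' b).
Proof.
move=> IH hk a0 ab Rs Rt ka kb da db.
have b0 : 0 < b by lia.
have br := sadj_braid a0 ab.
have brR : forall g, (sadj a * (sadj b * (sadj a * g)) = sadj b * (sadj a * (sadj b * g)))%g.
  by move=> g; rewrite !mulgA br.
have pb : pred_ord b = a by ordtac.
have d1 : ((P * sadj a)^-1)%g b < ((P * sadj a)^-1)%g (pred_ord b).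
  rewrite !permV_sadj pb.
  have -> : sadj a b = b by ordtac.
  rewrite /sadj tpermR -/(sadj a).
  move: da db; rewrite pb; lia.
have [k1 k1p] := desc_ninv b0 d1.
have d2 : ((P * sadj a * sadj b)^-1)%g a < ((P * sadj a * sadj b)^-1)%g (pred_ord a).
  rewrite !permV_sadj.
  have -> : sadj b a = b by ordtac.
  have -> : sadj a b = b by ordtac.
  have -> : sadj b (pred_ord a) = pred_ord a by ordtac.
  rewrite /sadj tpermL -/(sadj a).
  move: db; rewrite pb; lia.
have [k2 k2p] := desc_ninv a0 d2.
set x := (P * sadj a * sadj b * sadj a)%g in k2.
have [u /and3P [uok usz upr]] := word_exists x.
have Ru : RW x u by apply/and3P.
have d3 : ((P * sadj b)^-1)%g a < ((P * sadj b)^-1)%g (pred_ord a).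
  rewrite !permV_sadj.
  have -> : sadj b a = b by ordtac.
  have -> : sadj b (pred_ord a) = pred_ord a by ordtac.
  move: da db; rewrite pb; lia.
have [k3 k3p] := desc_ninv a0 d3.
have xb : (x * sadj b = P * sadj b * sadj a)%g.
  rewrite /x -!mulgA; congr (_ * _)%g.
  by rewrite brR sadj2 mulg1.
have Ra1 : RW (P * sadj a * sadj b)%g (rcons u a).
  apply: (RW_intro a0 Ru); first by rewrite /x sadjKr.
  rewrite k2 k1 ka; lia.
have Ra2 : RW (P * sadj a)%g (rcons (rcons u a) b).
  apply: (RW_intro b0 Ra1); first by rewrite sadjKr.
  rewrite k1 ka; lia.
have Ra3 : RW P (rcons (rcons (rcons u a) b) a).
  apply: (RW_intro a0 Ra2); first by rewrite sadjKr.
  by rewrite ka hk.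
have Rb1 : RW (P * sadj b * sadj a)%g (rcons u b).
  apply: (RW_intro b0 Ru); first by rewrite xb.
  rewrite k3 kb k2 k1 ka; lia.
have Rb2 : RW (P * sadj b)%g (rcons (rcons u b) a).
  apply: (RW_intro a0 Rb1); first by rewrite sadjKr.
  rewrite k3 kb; lia.
have Rb3 : RW P (rcons (rcons (rcons u b) a) b).
  apply: (RW_intro b0 Rb2); first by rewrite sadjKr.
  by rewrite kb hk.
have c1 : crt P (rcons s' a) (rcons (rcons (rcons u a) b) a).
  apply: (crt_lift' a0 (esym (sadjKr P a))); first by rewrite ka hk.
  exact: IH.
have c2 : crt P (rcons t' b) (rcons (rcons (rcons u b) a) b).
  apply: (crt_lift' b0 (esym (sadjKr P b))); first by rewrite kb hk.
  exact: IH.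
apply: rt_trans c1 _; apply: rt_trans _ (crt_sym c2).
apply: rt_step; split => //; split => //; left.
exists u, [::], a, b; split; first by left.
by rewrite -!cats1 -!catA.
Qed.

Theorem matsumoto k : IHk k.
Proof.
elim: k => [|k IH] P s t hk.
  move=> /and3P [_ /eqP s0 _] /and3P [_ /eqP t0 _].
  move: s0 t0; rewrite hk => /size0nil -> /size0nil ->; exact: rt_refl.
case/lastP: s => [|s' a]; first by case/and3P => _; rewrite hk.
case/lastP: t => [|t' b]; first by move=> _; case/and3P => _; rewrite hk.
move=> /RW_rcons [a0 Rs ea da] /RW_rcons [b0 Rt eb db].
have ka : ninv (P * sadj a)%g = k by move: ea; rewrite hk; case.
have kb : ninv (P * sadj b)%g = k by move: eb; rewrite hk; case.
case: (eqVneq a b) => [eab|ab].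
  subst b.
  apply: (crt_lift' a0 (esym (sadjKr P a))); first by rewrite ka hk.
  exact: IH.
have [far|[adj1|adj2]] :
  ((nat_of_ord a).+1 < b \/ (nat_of_ord b).+1 < a) \/
  nat_of_ord b = (nat_of_ord a).+1 \/ nat_of_ord a = (nat_of_ord b).+1.
  have : nat_of_ord a <> b by move=> e; move/eqP: ab; apply; apply: val_inj.
  lia.
- exact: (far_case IH).
- exact: (adj_case IH).
- apply: crt_sym; exact: (adj_case IH).
Qed.

End Mats.

Section Graph.
Variable T : finType.
Implicit Types (s : seq (T * T)) (e : T * T) (x y u v z : T).

Definition adj s : rel T := fun x y => ((x, y) \in s) || ((y, x) \in s).

Lemma adj_sym s : symmetric (adj s).
Proof. by move=> x y; rewrite /adj orbC. Qed.

Lemma csym s x y : connect (adj s) x y = connect (adj s) y x.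
Proof. exact: (sym_connect_sym (@adj_sym s)). Qed.

Lemma conn_mono s s' x y : {subset s <= s'} ->
  connect (adj s) x y -> connect (adj s') x y.
Proof.
move=> ss; move: x y; apply: connect_sub => a b /orP [h|h]; apply: connect1; apply/orP;
  [left|right]; exact: ss.
Qed.

Lemma conn_cons e s x y : connect (adj s) x y -> connect (adj (e :: s)) x y.
Proof. by apply: conn_mono => z zs; rewrite in_cons zs orbT. Qed.

Definition Rr s e x y := [\/ connect (adj s) x y,
   connect (adj s) x e.1 /\ connect (adj s) e.2 y |
   connect (adj s) x e.2 /\ connect (adj s) e.1 y].

Lemma conn_char e s x y : connect (adj (e :: s)) x y -> Rr s e x y.
Proof.
case: e => u v; case/connectP => p hp ->; elim: p x hp => [|y' p IH] x /=.
  by move=> _; constructor 1; apply: connect0.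
case/andP => hxy /IH; set z := last y' p => hr.
move: hxy; rewrite /adj !in_cons !xpair_eqE => /orP [/orP [/andP [/eqP ex /eqP ey]|hs]|/orP [/andP [/eqP ex /eqP ey]|hs]].
- subst x y'; case: hr => [h|[h1 h2]|[h1 h2]] /=.
  + by constructor 2; split => //; apply: connect0.
  + by constructor 1; apply: connect_trans h2; rewrite csym.
  + by constructor 1.
- have cxy : connect (adj s) x y' by apply: connect1; rewrite /adj hs.
  case: hr => [h|[h1 h2]|[h1 h2]] /=.
  + constructor 1; exact: connect_trans cxy h.
  + constructor 2; split => //; exact: connect_trans cxy h1.
  + constructor 3; split => //; exact: connect_trans cxy h1.
- subst x y'; case: hr => [h|[h1 h2]|[h1 h2]] /=.
  + by constructor 3; split => //; apply: connect0.
  + by constructor 1.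
  + by constructor 1; apply: connect_trans h2; rewrite csym.
- have cxy : connect (adj s) x y' by apply: connect1; rewrite /adj hs orbT.
  case: hr => [h|[h1 h2]|[h1 h2]] /=.
  + constructor 1; exact: connect_trans cxy h.
  + constructor 2; split => //; exact: connect_trans cxy h1.
  + constructor 3; split => //; exact: connect_trans cxy h1.
Qed.

Lemma conn_edge e s : connect (adj (e :: s)) e.1 e.2.
Proof. by apply: connect1; rewrite /adj in_cons -surjective_pairing eqxx. Qed.

Fixpoint nmerge s : nat :=
  if s is e :: s' then nmerge s' + ~~ connect (adj s') e.1 e.2 else 0.

Lemma nmerge_le s : nmerge s <= size s.
Proof. elim: s => //= e s IH; case: (connect _ _ _) => /=; lia. Qed.

Variable V : {set T}.

Definition cls s x := [set y in V | connect (adj s) x y].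
Definition nc s := #|[set cls s x | x in V]|.

Lemma cls_eq s x y : connect (adj s) x y -> cls s x = cls s y.
Proof.
move=> h; apply/setP => z; rewrite !inE.
case: (z \in V) => //=; apply/idP/idP => h'.
- by rewrite csym in h; exact: connect_trans h h'.
- exact: connect_trans h h'.
Qed.

Lemma in_cls s x y : y \in cls s x = (y \in V) && connect (adj s) x y.
Proof. by rewrite inE. Qed.

Lemma nc_nil : nc [::] = #|V|.
Proof.
rewrite /nc card_in_imset // => x y xV yV.
have hx : x \in cls [::] x by rewrite in_cls xV connect0.
move=> E; move: hx; rewrite E in_cls => /andP [_ /connectP [[|z p] hp e]] //=.
Qed.


Lemma nc_cons u v s : u \in V -> v \in V ->
  nc ((u, v) :: s) + ~~ connect (adj s) u v = nc s.
Proof.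
move=> uV vV.
have euv : connect (adj ((u, v) :: s)) u v := conn_edge (u, v) s.
case: (boolP (connect (adj s) u v)) => huv /=.
  have E : cls ((u, v) :: s) =1 cls s.
    move=> x; apply/setP => y.
    rewrite !in_cls; congr (_ && _); apply/idP/idP; last exact: conn_cons.
    move/conn_char => [h|[h1 h2]|[h1 h2]] //=.
    - exact: connect_trans h1 (connect_trans huv h2).
    - by apply: connect_trans h1 _; rewrite csym in huv; exact: connect_trans huv h2.
  by rewrite addn0 /nc (eq_imset _ E).
set cu := cls s u; set cv := cls s v; set C := [set cls s x | x in V].
have key : forall x, x \in V -> cls ((u, v) :: s) x = if x \in cu :|: cv then cu :|: cv else cls s x.
  move=> x xV; apply/setP => y; rewrite in_cls; case: ifP => hx.
  - rewrite in_setU !in_cls; case: (y \in V) => //=.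
    move: hx; rewrite in_setU !in_cls => /orP [] /andP [_ hx].
    + apply/idP/idP.
      * move/conn_char => [h|[h1 h2]|[h1 h2]] /=.
        -- by rewrite (connect_trans hx h).
        -- by rewrite h2 orbT.
        -- by rewrite h2.
      * have xu : connect (adj ((u, v) :: s)) x u by rewrite csym; apply: conn_cons.
        case/orP => h; apply: connect_trans xu _.
        -- exact: conn_cons.
        -- exact: connect_trans euv (conn_cons _ h).
    + apply/idP/idP.
      * move/conn_char => [h|[h1 h2]|[h1 h2]] /=.
        -- by rewrite (connect_trans hx h) orbT.
        -- by rewrite h2 orbT.
        -- by rewrite h2.
      * have xv : connect (adj ((u, v) :: s)) x v by rewrite csym; apply: conn_cons.
        case/orP => h; apply: connect_trans xv _.
        -- by apply: connect_trans (conn_cons _ h); rewrite csym.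
        -- exact: conn_cons.
  - rewrite in_cls; case: (y \in V) => //=.
    move: hx; rewrite in_setU !in_cls xV /=.
    move/negbT; rewrite negb_or => /andP [nu nv].
    apply/idP/idP; last exact: conn_cons.
    move/conn_char => [h|[h1 h2]|[h1 h2]] //=.
    + by rewrite csym h1 in nu.
    + by rewrite csym h1 in nv.
have uu : u \in cu by rewrite in_cls uV connect0.
have vv : v \in cv by rewrite in_cls vV connect0.
have cuv : cu != cv.
  apply/eqP => E; move: vv; rewrite -E in_cls => /andP [_ h].
  by rewrite h in huv.
have cuC : cu \in C by apply/imsetP; exists u.
have cvC : cv \in C by apply/imsetP; exists v.
have clsx : forall x, x \in V -> x \in cls s x by move=> x xV; rewrite in_cls xV connect0.
have img : [set cls ((u, v) :: s) x | x in V] = (cu :|: cv) |: (C :\ cu :\ cv).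
  apply/setP => K; apply/imsetP/idP.
  - case=> x xV ->; rewrite key //; case: ifP => hx; first by rewrite setU11.
    rewrite in_setU1 !in_setD1; apply/orP; right.
    apply/and3P; split.
    + by apply/eqP => E; move: hx; rewrite in_setU -E clsx ?orbT.
    + by apply/eqP => E; move: hx; rewrite in_setU -E clsx ?orbT.
    + by apply/imsetP; exists x.
  - rewrite in_setU1 => /orP [/eqP ->|].
    + exists u => //; by rewrite key // in_setU uu.
    + rewrite !in_setD1 => /and3P [Kcv Kcu /imsetP [x xV EK]]; subst K.
      exists x => //; rewrite key //; case: ifP => // /setUP [] h.
      * move: h; rewrite in_cls => /andP [_ /cls_eq E].
        by rewrite -E eqxx in Kcu.
      * move: h; rewrite in_cls => /andP [_ /cls_eq E].
        by rewrite -E eqxx in Kcv.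
have notin : (cu :|: cv) \notin (C :\ cu :\ cv).
  rewrite !in_setD1; apply/negP => /and3P [_ h /imsetP [z zV E]].
  have : u \in cls s z by rewrite -E in_setU uu.
  rewrite in_cls => /andP [_ /cls_eq E2].
  by move: h; rewrite E E2 /cu eqxx.
rewrite /nc img cardsU1 notin /=.
have h1 := cardsD1 cu C; have h2 := cardsD1 cv (C :\ cu).
rewrite cuC in h1; rewrite in_setD1 eq_sym cuv cvC /= in h2.
rewrite -/C; move: h1 h2 => /= h1 h2; lia.
Qed.

Lemma nc_merge s : {in s, forall e, (e.1 \in V) && (e.2 \in V)} ->
  nc s + nmerge s = #|V|.
Proof.
elim: s => [|e s IH] hs /=; first by rewrite nc_nil addn0.
case: e hs => u v hs /=.
have /andP [uV vV] := hs _ (mem_head _ _).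
rewrite addnCA nc_cons // addnC; apply: IH => e es.
apply: hs; by rewrite in_cons es orbT.
Qed.

Lemma nc_one s x0 : x0 \in V -> {in V &, forall x y, connect (adj s) x y} -> nc s = 1.
Proof.
move=> x0V hc; rewrite /nc.
have -> : [set cls s x | x in V] = [set cls s x0].
  apply/setP => K; rewrite in_set1; apply/imsetP/eqP => [[x xV ->]| ->].
  - exact: cls_eq (hc _ _ xV x0V).
  - by exists x0.
by rewrite cards1.
Qed.


Definition has_cyc s := exists p : seq T, [/\ 3 <= size p, uniq p & path.cycle (adj s) p].
Definition onCycle s := exists e, e \in s /\ connect (adj (rem e s)) e.1 e.2.

Lemma merge_onCycle s : uniq s -> nmerge s < size s -> onCycle s.
Proof.
elim: s => [|e s IH] //= /andP [es us].
case: (boolP (connect (adj s) e.1 e.2)) => h /=.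
  by move=> _; exists e; rewrite mem_head /= eqxx.
rewrite addn1 ltnS => /(IH us) [e' [e's he']].
exists e'; split; first by rewrite in_cons e's orbT.
have -> : rem e' (e :: s) = e :: rem e' s.
  rewrite /= ifN //; apply/eqP => E; by rewrite E e's in es.
exact: conn_cons.
Qed.

Lemma onCycle_merge s : uniq s -> onCycle s -> nmerge s < size s.
Proof.
elim: s => [|f s IH] /=; first by move=> _ [e []].
case/andP => fs us [e [es he]].
have hle := nmerge_le s.
case: (eqVneq e f) => [ef|ef].
  subst e; move: he; rewrite /= eqxx => h. rewrite h /= addn0. lia.
have es' : e \in s by move: es; rewrite in_cons (negbTE ef).
move: he; rewrite /= eq_sym (negbTE ef) => /conn_char.
have sub : {subset rem e s <= s} by move=> z; apply: mem_rem.
have ee : connect (adj s) e.1 e.2.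
  by apply: connect1; rewrite /adj -surjective_pairing es'.
case=> [h|[h1 h2]|[h1 h2]].
- have := IH us (ex_intro _ e (conj es' h)); lia.
- have : connect (adj s) f.1 f.2.
    apply: (connect_trans (y := e.1)); first by rewrite csym; exact: conn_mono sub h1.
    apply: connect_trans ee _; rewrite csym; exact: conn_mono sub h2.
  move=> h; rewrite h /=; lia.
- have : connect (adj s) f.1 f.2.
    apply: (connect_trans (conn_mono sub h2)).
    apply: (connect_trans (y := e.1)); [by rewrite csym | exact: conn_mono sub h1].
  move=> h; rewrite h /=; lia.
Qed.

Lemma adj_rem s e a b : uniq s -> adj s a b -> (a, b) != e -> (b, a) != e ->
  adj (rem e s) a b.
Proof.
move=> us; rewrite /adj !(mem_rem_uniq _ us) !inE => /orP [h|h] h1 h2;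
  by rewrite h h1 h2 ?orbT.
Qed.

Lemma cyc_onCycle s : uniq s -> has_cyc s -> onCycle s.
Proof.
move=> us [[|x0 [|x1 [|y r']]] [//= _ up hc]].
move: hc; rewrite /= => /and3P [h01 h1y hp].
move: up; rewrite /= !inE !negb_or => /andP [/and3P [x01 x0y x0r] /andP [/andP [x1y x1r] /andP [yr _]]].
set e := if (x0, x1) \in s then (x0, x1) else (x1, x0).
have es : e \in s.
  rewrite /e; case: ifP => // h; move: h01; by rewrite /adj h.
have ex1 : forall a b, a != x1 -> b != x1 -> ((a, b) != e) && ((b, a) != e).
  move=> a b ha hb; rewrite /e; case: ifP => _; rewrite !xpair_eqE;
  by rewrite (negbTE ha) (negbTE hb) ?andbF.
have pa : forall a q, path (adj s) a q -> x1 \notin a :: q -> path (adj (rem e s)) a q.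
  move=> a q; elim: q a => [|b q IHq] a //=.
  case/andP => hab hq; rewrite !inE !negb_or => /and3P [ha hb hq1].
  rewrite IHq ?inE ?negb_or ?hb ?hq1 //.
  have /andP [n1 n2] : ((a, b) != e) && ((b, a) != e) by apply: ex1; rewrite eq_sym.
  by rewrite adj_rem.
have p1 : path (adj (rem e s)) x1 (y :: rcons r' x0).
  rewrite /=; apply/andP; split.
  - apply: adj_rem => //; rewrite /e; case: ifP => _; rewrite !xpair_eqE;
    by rewrite ?(negbTE x1y) ?(negbTE x0y) ?(eq_sym y) ?(negbTE x1y) ?(eq_sym x1 x0) ?(negbTE x01) ?(eq_sym y x0) ?(negbTE x0y) ?andbF.
  - apply: pa => //; rewrite inE mem_rcons inE !negb_or x1y x1r /= andbT eq_sym //.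
have c : connect (adj (rem e s)) x1 x0.
  by apply/connectP; exists (y :: rcons r' x0) => //; rewrite /= last_rcons.
exists e; split => //; move: c; rewrite /e; case: ifP => _ /= c; [rewrite csym|]; exact: c.
Qed.



Lemma onCycle_cyc s : uniq s ->
  {in s, forall e, (e.1 != e.2) && ((e.2, e.1) \notin s)} -> onCycle s -> has_cyc s.
Proof.
move=> us hs [e [es he]].
have /andP [nuv nr] := hs e es.
case/connectP: he => p hp hl.
case/shortenP: hp hl => p' hp' up' _ hl.
have sub : {subset rem e s <= s} by move=> z; apply: mem_rem.
case: p' hp' up' hl => [|z1 [|z2 r]] hp' up' hl.
- by rewrite /= in hl; rewrite hl eqxx in nuv.
- rewrite /= in hl; subst z1.
  move: hp'; rewrite /= andbT /adj !(mem_rem_uniq _ us) !inE -surjective_pairing eqxx /=.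
  by rewrite (negbTE nr) andbF.
- exists [:: e.1, z1, z2 & r]; split => //.
  rewrite /path.cycle rcons_path; apply/andP; split.
  + have sr : subrel (adj (rem e s)) (adj s).
      by move=> a b /orP [h|h]; apply/orP; [left|right]; apply: sub.
    exact: (sub_path sr hp').
  + by rewrite -hl /adj -surjective_pairing es orbT.
Qed.

Lemma forest_iff s : uniq s ->
  {in s, forall e, [&& e.1 \in V, e.2 \in V, e.1 != e.2 & (e.2, e.1) \notin s]} ->
  {in V &, forall x y, connect (adj s) x y} ->
  (~ has_cyc s <-> size s = #|V| - 1).
Proof.
move=> us hs hc.
case: (set_0Vmem V) => [V0|[x0 x0V]].
  have s0 : s = [::].
    case: s us hs {hc} => [|e s'] // _ hs.
    by have := hs e (mem_head _ _); rewrite V0 inE.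
  subst s; rewrite V0 cards0; split => // _ [[|a [|b p]] [//= _ _]].
have hV : {in s, forall e, (e.1 \in V) && (e.2 \in V)}.
  by move=> e /hs /and4P [-> -> _ _].
have hm := nc_merge hV.
have h1 := nc_one x0V hc.
have hs2 : {in s, forall e, (e.1 != e.2) && ((e.2, e.1) \notin s)}.
  by move=> e /hs /and4P [_ _ -> ->].
have hle := nmerge_le s.
split.
- move=> ncy.
  have hn : ~ (nmerge s < size s).
    move=> h; apply: ncy; apply: (onCycle_cyc us hs2); exact: (merge_onCycle us h).
  move: hm h1 hle hn; set a := nc s; set b := nmerge s; lia.
- move=> hsz hcyc; have := onCycle_merge us (cyc_onCycle us hcyc).
  move: hm h1 hle hsz; set a := nc s; set b := nmerge s; lia.
Qed.

End Graph.

Section Final.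
Variable n : nat.
Variable w : 'S_n.
Local Notation Tu := ((len w).-tuple 'I_n).
Implicit Types (t : Tu).

Lemma braid_rel_sym : symmetric (@braid_rel n w).
Proof.
move=> x y; apply/idP/idP => /and3P [h1 h2 /asboolP h3]; apply/and3P; split => //;
  apply/asboolP; exact: braid_move_sym.
Qed.
Lemma comm_rel_sym : symmetric (@comm_rel n w).
Proof.
move=> x y; apply/idP/idP => /and3P [h1 h2 /asboolP h3]; apply/and3P; split => //;
  apply/asboolP; exact: comm_move_sym.
Qed.

Lemma eqrel_conn (r : rel Tu) : symmetric r -> equivalence_rel (connect r).
Proof.
move=> sr x y z; split; first exact: connect0.
move=> hxy; apply/idP/idP => h.
- by apply: connect_trans h; rewrite (sym_connect_sym sr).
- exact: connect_trans hxy h.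
Qed.

Lemma partB : partition (Bw w) (Rw w).
Proof. apply: equivalence_partitionP => x y z _ _ _; exact: (eqrel_conn braid_rel_sym x y z). Qed.
Lemma partC : partition (Cw w) (Rw w).
Proof. apply: equivalence_partitionP => x y z _ _ _; exact: (eqrel_conn comm_rel_sym x y z). Qed.

Definition Bcl t := pblock (Bw w) t.
Definition Ccl t := pblock (Cw w) t.

Lemma coverB : cover (Bw w) = Rw w.
Proof. by case/and3P: partB => /eqP. Qed.
Lemma coverC : cover (Cw w) = Rw w.
Proof. by case/and3P: partC => /eqP. Qed.
Lemma trivB : trivIset (Bw w). Proof. by case/and3P: partB. Qed.
Lemma trivC : trivIset (Cw w). Proof. by case/and3P: partC. Qed.

Lemma Bcl_mem t : t \in Rw w -> Bcl t \in Bw w.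
Proof. by move=> h; apply: pblock_mem; rewrite coverB. Qed.
Lemma Ccl_mem t : t \in Rw w -> Ccl t \in Cw w.
Proof. by move=> h; apply: pblock_mem; rewrite coverC. Qed.
Lemma in_Bcl t : t \in Rw w -> t \in Bcl t.
Proof. by move=> h; rewrite mem_pblock coverB. Qed.
Lemma in_Ccl t : t \in Rw w -> t \in Ccl t.
Proof. by move=> h; rewrite mem_pblock coverC. Qed.

Lemma Bcl_conn t t' : t \in Rw w -> t' \in Rw w ->
  (t' \in Bcl t) = connect (@braid_rel n w) t t'.
Proof.
move=> h h'; apply: (pblock_equivalence_partition (R := connect (@braid_rel n w))) => //.
move=> x y z _ _ _; exact: (eqrel_conn braid_rel_sym x y z).
Qed.
Lemma Ccl_conn t t' : t \in Rw w -> t' \in Rw w ->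
  (t' \in Ccl t) = connect (@comm_rel n w) t t'.
Proof.
move=> h h'; apply: (pblock_equivalence_partition (R := connect (@comm_rel n w))) => //.
move=> x y z _ _ _; exact: (eqrel_conn comm_rel_sym x y z).
Qed.

Lemma Bcl_eq t t' : t \in Rw w -> t' \in Bcl t -> Bcl t' = Bcl t.
Proof. move=> h h'; exact: def_pblock trivB (Bcl_mem h) h'. Qed.
Lemma Ccl_eq t t' : t \in Rw w -> t' \in Ccl t -> Ccl t' = Ccl t.
Proof. move=> h h'; exact: def_pblock trivC (Ccl_mem h) h'. Qed.

Definition es : seq (Gvert w * Gvert w) :=
  [seq (inl (Bcl t), inr (Ccl t)) | t <- enum (Rw w)].

Lemma es_inj : {in enum (Rw w) &, injective (fun t => (inl (Bcl t), inr (Ccl t)) : Gvert w * Gvert w)}.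
Proof.
move=> t t'; rewrite !mem_enum => h h' [eb ec].
have hb : connect (@braid_rel n w) t t' by rewrite -Bcl_conn // eb in_Bcl.
have hc : connect (@comm_rel n w) t t' by rewrite -Ccl_conn // ec in_Ccl.
exact: BC_inter h hb hc.
Qed.

Lemma es_uniq : uniq es.
Proof. by rewrite map_inj_in_uniq ?enum_uniq //; exact: es_inj. Qed.

Lemma size_es : size es = #|Rw w|.
Proof. by rewrite size_map cardE. Qed.

Lemma in_es B C : ((inl B, inr C) \in es) =
  [&& B \in Bw w, C \in Cw w & B :&: C != set0].
Proof.
apply/mapP/and3P.
- case=> t; rewrite mem_enum => h [-> ->]; split; [exact: Bcl_mem|exact: Ccl_mem|].
  by apply/set0Pn; exists t; rewrite inE in_Bcl ?in_Ccl.
- case=> hB hC /set0Pn [t]; rewrite inE => /andP [tB tC].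
  have tR : t \in Rw w by rewrite -coverB; apply/bigcupP; exists B.
  exists t; first by rewrite mem_enum.
  by rewrite /Bcl /Ccl (def_pblock trivB hB tB) (def_pblock trivC hC tC).
Qed.

Lemma notin_es_r (x y : Gvert w) : (x, y) \in es -> exists B C, x = inl B /\ y = inr C.
Proof. by case/mapP => t _ [-> ->]; exists (Bcl t), (Ccl t). Qed.

Lemma Gadj_adj : @Gadj n w =2 adj es.
Proof.
move=> [B|C] [B'|C'] /=; rewrite /adj.
- apply/esym/negbTE; apply/negP => /orP [] /notin_es_r [? [? [_ ?]]] //.
- by rewrite in_es; case: ((inr C', inl B) \in es) / boolP => [/notin_es_r [? [? [?]]]|]; rewrite ?orbF.
- by rewrite in_es orbC; case: ((inr C, inl B') \in es) / boolP => [/notin_es_r [? [? [?]]]|]; rewrite ?orbF.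
- apply/esym/negbTE; apply/negP => /orP [] /notin_es_r [? [? [? ?]]] //.
Qed.


Definition mvrel : rel Tu := fun x y => @braid_rel n w x y || @comm_rel n w x y.

Lemma Rw_size t : size t = ninv w.
Proof. by rewrite size_tuple len_ninv. Qed.

Lemma Rw_RW t : t \in Rw w -> RW w t.
Proof. by rewrite Rw_E => /andP [ok pr]; rewrite /RW ok pr Rw_size eqxx. Qed.

Lemma crt_tuple (x y : seq 'I_n) : crt w x y ->
  forall t, tval t = x -> t \in Rw w -> exists t', tval t' = y /\ connect mvrel t t'.
Proof.
move=> h0; have h1 := clos_rt_rt1n _ _ _ _ h0; clear h0; elim: h1 => [x0|x0 z y0 hm _ IH] t ht tR.
  by exists t; split => //; apply: connect0.
case: hm => [_ [/and3P [zok /eqP zsz /eqP zpr] hmv]].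
have hz : size z == len w by rewrite zsz len_ninv.
set tz := Tuple hz.
have tzR : tz \in Rw w by rewrite Rw_E /= zok zpr eqxx.
have [t' [h1 h2]] := IH tz erefl tzR.
exists t'; split => //; apply: connect_trans h2; apply: connect1.
rewrite /mvrel /braid_rel /comm_rel tR tzR /=.
case: hmv => h; apply/orP; [left|right]; apply/asboolP; by rewrite ht.
Qed.

Lemma mv_conn t t' : t \in Rw w -> t' \in Rw w -> connect mvrel t t'.
Proof.
move=> h h'; have := @matsumoto n (ninv w) w t t' erefl (Rw_RW h) (Rw_RW h').
move/crt_tuple => /(_ t erefl h) [t2 [/val_inj <- c]]; exact: c.
Qed.

Lemma es_edge t : t \in Rw w -> (inl (Bcl t), inr (Ccl t)) \in es.
Proof. by move=> h; apply/mapP; exists t; rewrite ?mem_enum. Qed.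

Lemma conn_tt t t' : t \in Rw w -> t' \in Rw w ->
  connect (adj es) (inl (Bcl t)) (inl (Bcl t')).
Proof.
move=> h h'; case/connectP: (mv_conn h h') => p hp ->.
elim: p t h hp {h'} => [|t2 p IH] t h /=; first by move=> _; apply: connect0.
case/andP => /orP [hb|hc] hp.
- have t2R : t2 \in Rw w by case/and3P: hb.
  have E : Bcl t2 = Bcl t.
    by apply: Bcl_eq => //; rewrite Bcl_conn // connect1.
  by rewrite -E; apply: IH.
- have t2R : t2 \in Rw w by case/and3P: hc.
  have E : Ccl t2 = Ccl t.
    by apply: Ccl_eq => //; rewrite Ccl_conn // connect1.
  apply: (connect_trans (y := inr (Ccl t))).
    by apply: connect1; rewrite /adj es_edge.
  apply: (connect_trans (y := inl (Bcl t2))); last exact: IH.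
  by apply: connect1; rewrite /adj -E es_edge ?orbT.
Qed.

Definition V : {set Gvert w} := [set inl B | B in Bw w] :|: [set inr C | C in Cw w].

Lemma vert_rep x : x \in V -> exists2 t, t \in Rw w & connect (adj es) x (inl (Bcl t)).
Proof.
case/setUP => /imsetP [K hK ->].
- have : K != set0 by apply/negP => /eqP E; case/and3P: partB => _ _; rewrite -E hK.
  case/set0Pn => t tK.
  have tR : t \in Rw w by rewrite -coverB; apply/bigcupP; exists K.
  exists t => //; rewrite /Bcl (def_pblock trivB hK tK); exact: connect0.
- have : K != set0 by apply/negP => /eqP E; case/and3P: partC => _ _; rewrite -E hK.
  case/set0Pn => t tK.
  have tR : t \in Rw w by rewrite -coverC; apply/bigcupP; exists K.
  exists t => //; apply: connect1; rewrite /adj (_ : K = Ccl t) ?es_edge ?orbT //.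
  by rewrite /Ccl (def_pblock trivC hK tK).
Qed.

Lemma V_conn : {in V &, forall x y, connect (adj es) x y}.
Proof.
move=> x y hx hy.
have [t tR hxt] := vert_rep hx.
have [t' t'R hyt] := vert_rep hy.
apply: connect_trans hxt _; apply: connect_trans (conn_tt tR t'R) _.
by rewrite csym.
Qed.

Lemma es_good : {in es, forall e, [&& e.1 \in V, e.2 \in V, e.1 != e.2 & (e.2, e.1) \notin es]}.
Proof.
move=> e /mapP [t]; rewrite mem_enum => tR -> /=.
apply/and3P; split.
- by apply/setUP; left; apply/imsetP; exists (Bcl t) => //; apply: Bcl_mem.
- by apply/setUP; right; apply/imsetP; exists (Ccl t) => //; apply: Ccl_mem.
- by apply/negP => /notin_es_r [? [? [? ?]]].
Qed.

Lemma card_V : #|V| = #|Bw w| + #|Cw w|.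
Proof.
have h := cardsUI [set inl B | B in Bw w] [set inr C | C in Cw w].
have h0 : [set inl B | B in Bw w] :&: [set inr C | C in Cw w] = set0 :> {set Gvert w}.
  apply/setP => x; rewrite !inE; apply/negP => /andP [/imsetP [? _ ->] /imsetP [? _ ?]] //.
have il : injective (@inl {set Tu} {set Tu}) by move=> a b [].
have ir : injective (@inr {set Tu} {set Tu}) by move=> a b [].
by rewrite h0 cards0 addn0 (card_imset _ il) (card_imset _ ir) in h.
Qed.

Lemma cyc_iff : Gamma_has_cycle w <-> has_cyc es.
Proof.
split => [[p [h1 h2 h3]]|[p [h1 h2 h3]]]; exists p; split => //.
- by rewrite -(eq_cycle Gadj_adj).
- by rewrite (eq_cycle Gadj_adj).
Qed.

Theorem main : circuit_free w <-> #|Rw w| = #|Bw w| + #|Cw w| - 1.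
Proof.
rewrite -card_V -size_es /circuit_free.
have := forest_iff es_uniq es_good V_conn.
move=> [h1 h2]; split.
- move=> nc; apply: h1 => hc; apply: nc; exact/cyc_iff.
- move=> hs hc; apply: (h2 hs); exact/cyc_iff.
Qed.

End Final.


Theorem proposition4p14 (n : nat) (w : 'S_n) :
  circuit_free w <-> #|Rw w| = #|Bw w| + #|Cw w| - 1.
Proof. exact: main. Qed.
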